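(* Let $T$ be a complete theory with monster model $\mathcal{U}$, $A\subseteq\mathcal{U}$ small, $\mu\in\mathfrak{M}_x(\mathcal{U})$, $\nu\in\mathfrak{M}_y(\mathcal{U})$, and suppose $\lambda\in\mathfrak{M}_{xy}(A)$ witnesses $\mu\geq_{\mathbb{E},A}\nu$. If $\lambda$ is smooth over $A$, then both $\mu$ and $\nu$ are smooth over $A$.
   Context: For $C\subseteq\mathcal{U}$, $\mathcal{L}_x(C)$ is the Boolean algebra of formulas in $x$ with parameters from $C$ modulo $T$, embedded in $\mathcal{L}_{xy}(C)$ via $\varphi(x)\mapsto\varphi(x)\wedge y=y$; $\mathfrak{M}_x(C)$ is the set of finitely additive probability measures on $\mathcal{L}_x(C)$. For $\omega\in\mathfrak{M}_{xy}(C)$, $\pi_x(\omega)(\varphi(x))=\omega(\varphi(x)\wedge y=y)$ (similarly $\pi_y$); $\omega|_D$ is restriction. $\lambda$ witnesses $\mu\geq_{\mathbb{E},A}\nu$ means $\pi_x(\lambda)=\mu|_A$ and every $\omega\in\mathfrak{M}_{xy}(\mathcal{U})$ with $\omega|_A=\lambda$ and $\pi_x(\omega)=\mu$ satisfies $\pi_y(\omega)=\nu$. A global measure is smooth over $A$ if it is the unique global measure with its restriction to $A$. A measure $\eta\in\mathfrak{M}_{xy}(A)$ is smooth over $A$ if there is a unique $\omega\in\mathfrak{M}_{xy}(\mathcal{U})$ with $\omega|_A=\eta$. *)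

(* Defs.v *)
From Stdlib Require Import Reals List.
Require Stdlib.Vectors.Fin.

Record Language := {
  Fun : Type;
  Rel : Type;
  fun_ar : Fun -> nat;
  rel_ar : Rel -> nat
}.

Record Structure (L : Language) := {
  dom :> Type;
  dom_inh : dom;
  fint : forall f : Fun L, (Fin.t (fun_ar L f) -> dom) -> dom;
  rint : forall r : Rel L, (Fin.t (rel_ar L r) -> dom) -> Prop
}.

Arguments dom {L}.
Arguments dom_inh {L}.
Arguments fint {L}.
Arguments rint {L}.

Inductive term (L : Language) (M : Type) : Type :=
| tvar : nat -> term L M
| tpar : M -> term L M
| tfun : forall f : Fun L, (Fin.t (fun_ar L f) -> term L M) -> term L M.

Inductive formula (L : Language) (M : Type) : Type :=
| fEq  : term L M -> term L M -> formula L M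
| fRel : forall r : Rel L, (Fin.t (rel_ar L r) -> term L M) -> formula L M
| fNeg : formula L M -> formula L M
| fAnd : formula L M -> formula L M -> formula L M
| fEx  : nat -> formula L M -> formula L M.

Arguments tvar {L M}.
Arguments tpar {L M}.
Arguments tfun {L M}.
Arguments fEq {L M}.
Arguments fRel {L M}.
Arguments fNeg {L M}.
Arguments fAnd {L M}.
Arguments fEx {L M}.

Definition env {L} (U : Structure L) := nat -> U.

Definition upd {L} {U : Structure L} (e : env U) (i : nat) (a : U) : env U :=
  fun j => if Nat.eqb j i then a else e j.

Fixpoint eval {L} (U : Structure L) (e : env U) (t : term L U) : U :=
  match t with
  | tvar i => e i
  | tpar a => a
  | tfun f args => fint U f (fun k => eval U e (args k))
  end.

Fixpoint sat {L} (U : Structure L) (e : env U) (phi : formula L U) : Prop :=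
  match phi with
  | fEq t1 t2 => eval U e t1 = eval U e t2
  | fRel r args => rint U r (fun k => eval U e (args k))
  | fNeg psi => ~ sat U e psi
  | fAnd p q => sat U e p /\ sat U e q
  | fEx i psi => exists a : U, sat U (upd e i a) psi
  end.

Fixpoint term_params {L M} (C : M -> Prop) (t : term L M) : Prop :=
  match t with
  | tvar _ => True
  | tpar a => C a
  | tfun f args => forall k, term_params C (args k)
  end.

Fixpoint form_params {L M} (C : M -> Prop) (phi : formula L M) : Prop :=
  match phi with
  | fEq t1 t2 => term_params C t1 /\ term_params C t2
  | fRel r args => forall k, term_params C (args k)
  | fNeg p => form_params C p
  | fAnd p q => form_params C p /\ form_params C q
  | fEx _ p => form_params C p
  end.

Fixpoint term_vars {L M} (V : nat -> Prop) (t : term L M) : Prop :=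
  match t with
  | tvar i => V i
  | tpar _ => True
  | tfun f args => forall k, term_vars V (args k)
  end.

Fixpoint form_vars {L M} (V : nat -> Prop) (phi : formula L M) : Prop :=
  match phi with
  | fEq t1 t2 => term_vars V t1 /\ term_vars V t2
  | fRel r args => forall k, term_vars V (args k)
  | fNeg p => form_vars V p
  | fAnd p q => form_vars V p /\ form_vars V q
  | fEx i p => form_vars (fun j => j = i \/ V j) p
  end.

Fixpoint map_term {L M} (g : M -> M) (t : term L M) : term L M :=
  match t with
  | tvar i => tvar i
  | tpar a => tpar (g a)
  | tfun f args => tfun f (fun k => map_term g (args k))
  end.

Fixpoint map_form {L M} (g : M -> M) (phi : formula L M) : formula L M :=
  match phi with
  | fEq t1 t2 => fEq (map_term g t1) (map_term g t2)
  | fRel r args => fRel r (fun k => map_term g (args k))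
  | fNeg p => fNeg (map_form g p)
  | fAnd p q => fAnd (map_form g p) (map_form g q)
  | fEx i p => fEx i (map_form g p)
  end.

Definition lt_card (X K : Type) : Prop :=
  (exists f : X -> K, forall a b, f a = f b -> a = b) /\
  ~ (exists g : K -> X, forall a b, g a = g b -> a = b).

Definition subset_type {L} (U : Structure L) (B : U -> Prop) := { b : U | B b }.

Definition saturated {L} (U : Structure L) (K : Type) : Prop :=
  forall (B : U -> Prop), lt_card (subset_type U B) K ->
  forall (n : nat) (p : formula L U -> Prop),
    (forall phi, p phi -> form_params B phi /\ form_vars (fun i => (i < n)%nat) phi) ->
    (forall l : list (formula L U), (forall phi, In phi l -> p phi) ->
        exists e : env U, forall phi, In phi l -> sat U e phi) ->
    exists e : env U, forall phi, p phi -> sat U e phi.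

Definition automorphism {L} (U : Structure L) (s : U -> U) : Prop :=
  (exists s' : U -> U, (forall a, s' (s a) = a) /\ (forall a, s (s' a) = a)) /\
  (forall f args, s (fint U f args) = fint U f (fun k => s (args k))) /\
  (forall r args, rint U r args <-> rint U r (fun k => s (args k))).

Definition elementary_on {L} (U : Structure L) (B : U -> Prop) (g : U -> U) : Prop :=
  forall (phi : formula L U) (e : env U), form_params B phi ->
    form_vars (fun _ => False) phi ->
    (sat U e phi <-> sat U e (map_form g phi)).

Definition strongly_homogeneous {L} (U : Structure L) (K : Type) : Prop :=
  forall (B : U -> Prop) (g : U -> U), lt_card (subset_type U B) K ->
    elementary_on U B g ->
    exists s, automorphism U s /\ forall b, B b -> s b = g b.

(* U is a monster model (for T = Th(U)) with respect to the cardinal |K|,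
   which is uncountable and larger than the language. *)
Definition monster {L} (U : Structure L) (K : Type) : Prop :=
  lt_card nat K /\ lt_card (Fun L) K /\ lt_card (Rel L) K /\
  saturated U K /\ strongly_homogeneous U K.

Definition small {L} (U : Structure L) (K : Type) (A : U -> Prop) : Prop :=
  lt_card (subset_type U A) K.

Definition vset {L} (U : Structure L) := env U -> Prop.

Definition sat_set {L} (U : Structure L) (phi : formula L U) : vset U :=
  fun e => sat U e phi.

(* S is an element of L_V(C): defined by a formula with free variables in V
   and parameters in C (formulas modulo equivalence in U = same set). *)
Definition definable {L} (U : Structure L) (V : nat -> Prop) (C : U -> Prop)
  (S : vset U) : Prop :=
  exists phi : formula L U, form_params C phi /\ form_vars V phi /\ S = sat_set U phi.

Definition full_set {L} (U : Structure L) : vset U := fun _ => True.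
Definition everything {L} (U : Structure L) : U -> Prop := fun _ => True.

Definition keisler_measure {L} (U : Structure L) (V : nat -> Prop) (C : U -> Prop)
  (mu : vset U -> R) : Prop :=
  (forall S, definable U V C S -> (0 <= mu S)%R) /\
  mu (full_set U) = 1%R /\
  (forall S T, definable U V C S -> definable U V C T ->
     (forall e, ~ (S e /\ T e)) ->
     mu (fun e => S e \/ T e) = (mu S + mu T)%R).

Definition agree {L} (U : Structure L) (V : nat -> Prop) (C : U -> Prop)
  (mu mu' : vset U -> R) : Prop :=
  forall S, definable U V C S -> mu S = mu' S.

(* Variable tuples: x = (v_0,..,v_{n-1}), y = (v_n,..,v_{n+m-1}). *)
Definition Vx (n : nat) : nat -> Prop := fun i => (i < n)%nat.
Definition Vy (n m : nat) : nat -> Prop := fun i => (n <= i /\ i < n + m)%nat.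
Definition Vxy (n m : nat) : nat -> Prop := fun i => (i < n + m)%nat.

(* Since a set defined by phi(x) (resp. psi(y)) is, as a set of assignments,
   the same set as the one defined by phi(x) /\ y = y (resp. psi(y) /\ x = x),
   pi_x(omega) is omega read on L_x-definable sets; pi_x(omega) = mu|_C is
   thus "agree (Vx n) C omega mu", and likewise for pi_y. *)

Definition smooth_global {L} (U : Structure L) (V : nat -> Prop) (A : U -> Prop)
  (mu : vset U -> R) : Prop :=
  forall mu', keisler_measure U V (everything U) mu' -> agree U V A mu' mu ->
    agree U V (everything U) mu' mu.

Definition smooth_over {L} (U : Structure L) (V : nat -> Prop) (A : U -> Prop)
  (eta : vset U -> R) : Prop :=
  (exists w, keisler_measure U V (everything U) w /\ agree U V A w eta) /\
  (forall w1 w2, keisler_measure U V (everything U) w1 ->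
     keisler_measure U V (everything U) w2 ->
     agree U V A w1 eta -> agree U V A w2 eta -> agree U V (everything U) w1 w2).

Definition witnesses_E {L} (U : Structure L) (n m : nat) (A : U -> Prop)
  (lam mu nu : vset U -> R) : Prop :=
  agree U (Vx n) A lam mu /\
  forall w, keisler_measure U (Vxy n m) (everything U) w ->
    agree U (Vxy n m) A w lam -> agree U (Vx n) (everything U) w mu ->
    agree U (Vy n m) (everything U) w nu.

(* Main.v *)
Require Import Defs.
From Stdlib Require Import Reals.
From Stdlib Require Import Bool.
From mathcomp Require classical_sets boolp.
Lemma zorn_prop (T : Type) (t0 : T) (Rl : T -> T -> Prop) :
  (forall t, Rl t t) -> (forall r s t, Rl r s -> Rl s t -> Rl r t) ->
  (forall A : T -> Prop, (forall s t, A s -> A t -> Rl s t \/ Rl t s) ->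
     exists t, forall s, A s -> Rl s t) ->
  exists t, forall s, Rl t s -> Rl s t.
Proof.
  intros H1 H2 H3.
  assert (E : forall a b, boolp.asbool (Rl a b) = true <-> Rl a b).
  { intros a b. symmetry. apply reflect_iff. apply boolp.asboolP. }
  destruct (@classical_sets.ZL_preorder T t0 (fun a b => boolp.asbool (Rl a b))) as [t Ht].
  - intro t. apply E. apply H1.
  - intros r s t A B. apply E. apply E in A. apply E in B. eauto.
  - intros A HA. destruct (H3 A) as [t Ht].
    + intros s t As At. destruct (HA s t As At) as [X|X]; [left|right]; apply E; exact X.
    + exists t. intros s As. apply E. auto.
  - exists t. intros s Hs. apply E. apply Ht. apply E. exact Hs.
Qed.
From Stdlib Require Import Reals Lra Classical ClassicalEpsilon FunctionalExtensionality PropExtensionality.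
Open Scope R_scope.

Section Abs.
Variable X : Type.
Definition st := X -> Prop.

Lemma sext (S T : st) : (forall x, S x <-> T x) -> S = T.
Proof. intro H. extensionality x. apply propositional_extensionality. apply H. Qed.

Definition alg (D : st -> Prop) :=
  D (fun _ => True) /\ (forall S, D S -> D (fun x => ~ S x)) /\
  (forall S T, D S -> D T -> D (fun x => S x /\ T x)).

Definition meas (D : st -> Prop) (m : st -> R) :=
  (forall S, D S -> 0 <= m S) /\ m (fun _ => True) = 1 /\
  (forall S T, D S -> D T -> (forall x, ~ (S x /\ T x)) ->
     m (fun x => S x \/ T x) = m S + m T).

Section AlgLemmas.
Variable D : st -> Prop.
Hypothesis HD : alg D.

Lemma alg_full : D (fun _ => True).
Proof. apply HD. Qed.
Lemma alg_compl S : D S -> D (fun x => ~ S x).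
Proof. apply HD. Qed.
Lemma alg_and S T : D S -> D T -> D (fun x => S x /\ T x).
Proof. apply HD. Qed.
Lemma alg_ext S T : D S -> (forall x, S x <-> T x) -> D T.
Proof. intros H E. rewrite <- (sext S T E). exact H. Qed.
Lemma alg_or S T : D S -> D T -> D (fun x => S x \/ T x).
Proof.
  intros A B. apply (alg_ext (fun x => ~ ((~ S x) /\ (~ T x)))).
  - apply alg_compl, alg_and; apply alg_compl; assumption.
  - intro x. destruct (classic (S x)); tauto.
Qed.
Lemma alg_empty : D (fun _ => False).
Proof. apply (alg_ext (fun x => ~ True)). apply alg_compl, alg_full. tauto. Qed.

Variable m : st -> R.
Hypothesis Hm : meas D m.

Lemma m_nonneg S : D S -> 0 <= m S.
Proof. apply Hm. Qed.
Lemma m_full : m (fun _ => True) = 1.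
Proof. apply Hm. Qed.
Lemma m_add S T : D S -> D T -> (forall x, ~ (S x /\ T x)) ->
     m (fun x => S x \/ T x) = m S + m T.
Proof. apply Hm. Qed.
Lemma m_ext S T : (forall x, S x <-> T x) -> m S = m T.
Proof. intro E. rewrite (sext S T E). reflexivity. Qed.

Lemma m_empty : m (fun _ => False) = 0.
Proof.
  assert (H := m_add (fun _ => True) (fun _ => False) alg_full alg_empty ltac:(tauto)). cbv beta in H.
  rewrite (m_ext (fun x => True \/ False) (fun _ => True)) in H by tauto.
  rewrite m_full in H. lra.
Qed.

Lemma m_compl S : D S -> m (fun x => ~ S x) = 1 - m S.
Proof.
  intro HS.
  assert (H := m_add S (fun x => ~ S x) HS (alg_compl S HS) ltac:(tauto)). cbv beta in H.
  rewrite (m_ext (fun x => S x \/ ~ S x) (fun _ => True)) in H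
    by (intro x; destruct (classic (S x)); tauto).
  rewrite m_full in H. lra.
Qed.

Lemma m_split S T : D S -> D T ->
  m T = m (fun x => T x /\ S x) + m (fun x => T x /\ ~ S x).
Proof.
  intros HS HT.
  rewrite <- m_add.
  - apply m_ext. intro x. destruct (classic (S x)); tauto.
  - apply alg_and; assumption.
  - apply alg_and; [assumption| apply alg_compl; assumption].
  - tauto.
Qed.

Lemma m_mono S T : D S -> D T -> (forall x, S x -> T x) -> m S <= m T.
Proof.
  intros HS HT I.
  rewrite (m_split S T HS HT).
  rewrite (m_ext (fun x => T x /\ S x) S) by (intro x; specialize (I x); tauto).
  assert (0 <= m (fun x => T x /\ ~ S x)).
  { apply m_nonneg. apply alg_and; [assumption|apply alg_compl; assumption]. }
  lra.
Qed.

Lemma m_le1 S : D S -> m S <= 1.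
Proof. intro HS. rewrite <- m_full. apply m_mono; auto using alg_full. Qed.

Lemma m_union_le S T : D S -> D T -> m (fun x => S x \/ T x) <= m S + m T.
Proof.
  intros HS HT.
  rewrite (m_ext (fun x => S x \/ T x) (fun x => S x \/ (T x /\ ~ S x)))
    by (intro x; destruct (classic (S x)); tauto).
  rewrite m_add; auto.
  - assert (m (fun x => T x /\ ~ S x) <= m T).
    { apply m_mono; auto. apply alg_and; auto using alg_compl. tauto. }
    lra.
  - apply alg_and; auto using alg_compl.
  - tauto.
Qed.

Definition cov (Z : st) (r : R) := exists d, D d /\ (forall x, Z x -> d x) /\ r = m d.
Definition is_inf (P : R -> Prop) r :=
  (forall s, P s -> r <= s) /\ (forall t, (forall s, P s -> t <= s) -> t <= r).

Lemma inf_exists Z : exists r, is_inf (cov Z) r.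
Proof.
  destruct (completeness (fun r => cov Z (- r))) as [l [Hl1 Hl2]].
  - exists 0. intros r [d [Dd [_ E]]]. assert (0 <= m d) by (apply m_nonneg; auto). lra.
  - exists (- 1). exists (fun _ => True). split; [apply alg_full|]. split; [auto|].
    rewrite m_full. lra.
  - exists (- l). split.
    + intros s Hs. assert (s' : cov Z (- - s)) by (rewrite Ropp_involutive; exact Hs).
      specialize (Hl1 _ s'). lra.
    + intros t Ht. assert (l <= - t).
      { apply Hl2. intros r Hr. specialize (Ht _ Hr). lra. }
      lra.
Qed.
End AlgLemmas.

Definition outer D m (Z : st) : R := epsilon (inhabits 0) (fun r => is_inf (cov D m Z) r).

Section Outer.
Variable D : st -> Prop.
Hypothesis HD : alg D.
Variable m : st -> R.
Hypothesis Hm : meas D m.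
Notation o := (outer D m).
Let aC := alg_compl D HD.
Let aA := alg_and D HD.
Let aO := alg_or D HD.
Let aF := alg_full D HD.

Lemma o_spec Z : is_inf (cov D m Z) (o Z).
Proof. unfold outer. apply epsilon_spec. apply inf_exists; assumption. Qed.

Lemma o_le Z d : D d -> (forall x, Z x -> d x) -> o Z <= m d.
Proof. intros Dd I. apply (proj1 (o_spec Z)). exists d; auto. Qed.

Lemma o_ge Z t : (forall d, D d -> (forall x, Z x -> d x) -> t <= m d) -> t <= o Z.
Proof. intro H. apply (proj2 (o_spec Z)). intros s [d [Dd [I E]]]. subst. auto. Qed.

Lemma o_ext Z W : (forall x, Z x <-> W x) -> o Z = o W.
Proof. intro E. rewrite (sext Z W E). reflexivity. Qed.

Lemma o_D d : D d -> o d = m d.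
Proof.
  intro Dd. apply Rle_antisym.
  - apply o_le; auto.
  - apply o_ge. intros d' Dd' I. apply (m_mono D HD m Hm); auto.
Qed.

Lemma o_nonneg Z : 0 <= o Z.
Proof. apply o_ge. intros d Dd _. apply (m_nonneg D m Hm); auto. Qed.

Lemma o_approx Z eps : 0 < eps -> exists d, D d /\ (forall x, Z x -> d x) /\ m d < o Z + eps.
Proof.
  intro He. apply NNPP. intro N.
  assert (o Z + eps <= o Z).
  { apply o_ge. intros d Dd I. apply Rnot_lt_le. intro L. apply N. exists d; auto. }
  lra.
Qed.

Lemma o_sub Z W : o (fun x => Z x \/ W x) <= o Z + o W.
Proof.
  apply Rnot_lt_le. intro L.
  set (eps := (o (fun x => Z x \/ W x) - o Z - o W) / 2).
  assert (He : 0 < eps) by (unfold eps; lra).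
  destruct (o_approx Z eps He) as [d1 [D1 [I1 L1]]].
  destruct (o_approx W eps He) as [d2 [D2 [I2 L2]]].
  assert (o (fun x => Z x \/ W x) <= m (fun x => d1 x \/ d2 x)).
  { apply o_le. apply (alg_or D HD); auto. intros x [H|H]; [left; auto|right; auto]. }
  assert (m (fun x => d1 x \/ d2 x) <= m d1 + m d2) by (apply (m_union_le D HD m Hm); auto).
  unfold eps in *. lra.
Qed.

Lemma o_disj_D d0 W : D d0 -> (forall x, ~ (d0 x /\ W x)) ->
  o (fun x => d0 x \/ W x) = m d0 + o W.
Proof.
  intros Dd0 Dis. apply Rle_antisym.
  - rewrite <- (o_D d0 Dd0). apply o_sub.
  - apply o_ge. intros g Dg I.
    rewrite (m_split D HD m Hm d0 g Dd0 Dg).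
    rewrite (m_ext m (fun x => g x /\ d0 x) d0) by (intro x; specialize (I x); tauto).
    assert (o W <= m (fun x => g x /\ ~ d0 x)).
    { apply o_le. apply (alg_and D HD); auto using aC.
      intros x Wx. split. apply I; auto. intro. apply (Dis x); auto. }
    lra.
Qed.

Lemma phi_add c d1 d2 : D d1 -> D d2 -> (forall x, ~ (d1 x /\ d2 x)) ->
  o (fun x => (d1 x \/ d2 x) /\ c x) = o (fun x => d1 x /\ c x) + o (fun x => d2 x /\ c x).
Proof.
  intros D1 D2 Dis. apply Rle_antisym.
  - rewrite (o_ext _ (fun x => (d1 x /\ c x) \/ (d2 x /\ c x))) by (intro x; tauto).
    apply o_sub.
  - apply o_ge. intros g Dg I.
    assert (H1' : o (fun x => d1 x /\ c x) <= m (fun x => g x /\ d1 x)).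
    { apply o_le. apply (alg_and D HD); auto. intros x H; split; [apply I|]; tauto. }
    assert (H2' : o (fun x => d2 x /\ c x) <= m (fun x => g x /\ d2 x)).
    { apply o_le. apply (alg_and D HD); auto. intros x H; split; [apply I|]; tauto. }
    assert (H3' : m (fun x => (g x /\ d1 x) \/ (g x /\ d2 x)) <= m g).
    { apply (m_mono D HD m Hm); auto; intros x; tauto. }
    rewrite (m_add D m Hm) in H3'; [ |apply (alg_and D HD); auto|apply (alg_and D HD); auto| ].
    lra. intros x. specialize (Dis x). tauto.
Qed.

Lemma psi_eq c e : D e -> m e - o (fun x => e x /\ c x) = 1 - o (fun x => ~ e x \/ c x).
Proof.
  intro De.
  rewrite (o_ext (fun x => ~ e x \/ c x) (fun x => ~ e x \/ (e x /\ c x)))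
    by (intro x; destruct (classic (e x)); tauto).
  rewrite o_disj_D; auto using aC.
  rewrite (m_compl D HD m Hm e De). lra. tauto.
Qed.


Section OneStep.
Variable c : st.
Definition D' (Z : st) := exists d e, D d /\ D e /\ Z = (fun x => (d x /\ c x) \/ (e x /\ ~ c x)).
Definition m' (Z : st) := o (fun x => Z x /\ c x) + (1 - o (fun x => ~ Z x \/ c x)).

Lemma m'_ext Z W : (forall x, Z x <-> W x) -> m' Z = m' W.
Proof. intro E. rewrite (sext Z W E). reflexivity. Qed.

Lemma m'_rep d e : D d -> D e ->
  m' (fun x => (d x /\ c x) \/ (e x /\ ~ c x)) = o (fun x => d x /\ c x) + (m e - o (fun x => e x /\ c x)).
Proof.
  intros Dd De. unfold m'.
  rewrite (o_ext _ (fun x => d x /\ c x)) by (intro x; tauto).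
  rewrite (o_ext (fun x => ~ ((d x /\ c x) \/ (e x /\ ~ c x)) \/ c x) (fun x => ~ e x \/ c x))
    by (intro x; destruct (classic (c x)); tauto).
  rewrite (psi_eq c e De). reflexivity.
Qed.

Lemma D'_alg : alg D'.
Proof.
  split; [|split].
  - exists (fun _ => True), (fun _ => True). split; [auto|split; [auto|]].
    apply sext. intro x. destruct (classic (c x)); tauto.
  - intros S [d [e [Dd [De E]]]]. subst S.
    exists (fun x => ~ d x), (fun x => ~ e x). split; [auto|split; [auto|]].
    apply sext. intro x. destruct (classic (c x)); destruct (classic (d x)); destruct (classic (e x)); tauto.
  - intros S T [d [e [Dd [De E]]]] [d' [e' [Dd' [De' E']]]]. subst S T.
    exists (fun x => d x /\ d' x), (fun x => e x /\ e' x). split; [auto|split; [auto|]].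
    apply sext. intro x. destruct (classic (c x)); tauto.
Qed.

Lemma m'_meas : meas D' m'.
Proof.
  split; [|split].
  - intros S [d [e [Dd [De E]]]]. subst S. rewrite m'_rep by auto.
    assert (0 <= o (fun x => d x /\ c x)) by apply o_nonneg.
    assert (o (fun x => e x /\ c x) <= m e) by (apply o_le; [auto| intros x; tauto]).
    lra.
  - rewrite (m'_ext _ (fun x => ((fun _ => True) x /\ c x) \/ ((fun _ => True) x /\ ~ c x)))
      by (intro x; destruct (classic (c x)); tauto).
    rewrite m'_rep by auto. rewrite (m_full D m Hm). lra.
  - intros Z1 Z2 [d1 [e1 [Dd1 [De1 E1]]]] [d2 [e2 [Dd2 [De2 E2]]]] Dis.
    set (d2' := fun x => d2 x /\ ~ d1 x).
    set (e2' := fun x => e2 x /\ ~ e1 x).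
    assert (Dd2' : D d2') by (apply aA; auto).
    assert (De2' : D e2') by (apply aA; auto).
    rewrite (m'_ext _ (fun x => ((fun x => d1 x \/ d2' x) x /\ c x) \/ ((fun x => e1 x \/ e2' x) x /\ ~ c x))).
    2:{ intro x. subst Z1 Z2 d2' e2'. destruct (classic (c x)); destruct (classic (d1 x));
        destruct (classic (e1 x)); tauto. }
    rewrite m'_rep by auto.
    subst Z1 Z2. rewrite m'_rep by auto. rewrite m'_rep by auto.
    assert (F1 := phi_add c d1 d2' Dd1 Dd2' ltac:(intro x; unfold d2'; tauto)).
    assert (F2 := phi_add c e1 e2' De1 De2' ltac:(intro x; unfold e2'; tauto)).
    assert (F3 := m_add D m Hm e1 e2' De1 De2' ltac:(intro x; unfold e2'; tauto)).
    cbv beta in F1, F2, F3.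
    rewrite F1, F2, F3.
    assert (G1 : o (fun x => d2' x /\ c x) = o (fun x => d2 x /\ c x)).
    { apply o_ext. intro x. specialize (Dis x). cbv beta in Dis. unfold d2'. tauto. }
    assert (G2 : m e2' - o (fun x => e2' x /\ c x) = m e2 - o (fun x => e2 x /\ c x)).
    { rewrite (psi_eq c e2' De2'), (psi_eq c e2 De2). f_equal. apply o_ext. intro x.
      specialize (Dis x). cbv beta in Dis. unfold e2'. destruct (classic (c x)); destruct (classic (e1 x)); tauto. }
    lra.
Qed.

Lemma m'_extends S : D S -> D' S /\ m' S = m S.
Proof.
  intro DS. split.
  - exists S, S. split; [auto|split;[auto|]]. apply sext. intro x. destruct (classic (c x)); tauto.
  - rewrite (m'_ext _ (fun x => (S x /\ c x) \/ (S x /\ ~ c x))) by (intro x; destruct (classic (c x)); tauto).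
    rewrite m'_rep by auto. lra.
Qed.

Lemma m'_c : D' c /\ m' c = o c.
Proof.
  assert (E : forall x, c x <-> ((fun _ => True) x /\ c x) \/ ((fun _ => False) x /\ ~ c x)) by (intro x; tauto).
  split.
  - exists (fun _ => True), (fun _ => False). split; [auto|split; [apply (alg_empty D HD)|]].
    apply sext. exact E.
  - rewrite (m'_ext _ _ E). rewrite m'_rep by (auto; apply (alg_empty D HD)).
    cbv beta.
    rewrite (o_ext (fun x => True /\ c x) c) by (intro x; tauto).
    rewrite (o_ext (fun x => False /\ c x) (fun _ => False)) by (intro x; tauto).
    rewrite (m_empty D HD m Hm). rewrite (o_D (fun _ => False)) by (apply (alg_empty D HD)).
    rewrite (m_empty D HD m Hm). lra.
Qed.
End OneStep.
End Outer. End Abs.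
Section Ext.
Variable X : Type.
Variable D0 : st X -> Prop.
Hypothesis HD0 : alg X D0.
Variable m0 : st X -> R.
Hypothesis Hm0 : meas X D0 m0.
Variable c : st X.

Definition good (p : (st X -> Prop) * (st X -> R)) :=
  alg X (fst p) /\ meas X (fst p) (snd p) /\
  (forall S, D0 S -> fst p S /\ snd p S = m0 S) /\
  fst p c /\ snd p c = outer X D0 m0 c.
Definition GP := {p | good p}.
Definition Rl (p q : GP) := forall S, fst (proj1_sig p) S ->
  fst (proj1_sig q) S /\ snd (proj1_sig q) S = snd (proj1_sig p) S.

Lemma step_good (p : GP) (S : st X) :
  good (D' X (fst (proj1_sig p)) S, m' X (fst (proj1_sig p)) (snd (proj1_sig p)) S).
Proof.
  destruct p as [[D m] [HD [Hm [H0 [Hc Hc']]]]]. simpl.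
  split; [|split; [|split; [|split]]]; simpl.
  - apply D'_alg; auto.
  - apply m'_meas; auto.
  - intros S0 HS0. destruct (H0 S0 HS0) as [A B].
    destruct (m'_extends X D HD m Hm S S0 A). split; auto. simpl in *. rewrite <- B. auto.
  - apply (m'_extends X D HD m Hm S c Hc).
  - destruct (m'_extends X D HD m Hm S c Hc). simpl in *. rewrite <- Hc'. auto.
Qed.

Lemma base_good : good (D' X D0 c, m' X D0 m0 c).
Proof.
  split; [|split; [|split; [|split]]]; simpl.
  - apply D'_alg; auto.
  - apply m'_meas; auto.
  - intros S0 HS0. apply m'_extends; auto.
  - apply (m'_c X D0 HD0 m0 Hm0 c).
  - apply (m'_c X D0 HD0 m0 Hm0 c).
Qed.

Lemma Rl_refl p : Rl p p.
Proof. intros S H. auto. Qed.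
Lemma Rl_trans p q r : Rl p q -> Rl q r -> Rl p r.
Proof.
  intros A B S H. destruct (A S H) as [A1 A2]. destruct (B S A1) as [B1 B2].
  split; auto. congruence.
Qed.

Section Chain.
Variable A : GP -> Prop.
Hypothesis Atot : forall s t, A s -> A t -> Rl s t \/ Rl t s.
Variable p0 : GP.
Hypothesis Ap0 : A p0.

Definition DU (S : st X) := exists p, A p /\ fst (proj1_sig p) S.
Definition mU (S : st X) := epsilon (inhabits 0)
  (fun r => exists p, A p /\ fst (proj1_sig p) S /\ snd (proj1_sig p) S = r).

Lemma mU_val p S : A p -> fst (proj1_sig p) S -> mU S = snd (proj1_sig p) S.
Proof.
  intros Ap HS. unfold mU.
  assert (Ex : exists r, exists p, A p /\ fst (proj1_sig p) S /\ snd (proj1_sig p) S = r) by eauto.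
  destruct (epsilon_spec (inhabits 0) _ Ex) as [q [Aq [Sq E]]].
  rewrite <- E. destruct (Atot p q Ap Aq) as [R1|R1].
  - apply (R1 S HS).
  - symmetry. apply (R1 S Sq).
Qed.

Lemma common p q : A p -> A q -> exists r, A r /\ Rl p r /\ Rl q r.
Proof.
  intros Ap Aq. destruct (Atot p q Ap Aq) as [R1|R1].
  - exists q. auto using Rl_refl.
  - exists p. auto using Rl_refl.
Qed.

Lemma gprop (p : GP) : good (proj1_sig p).
Proof. exact (proj2_sig p). Qed.

Lemma U_good : good (DU, mU).
Proof.
  destruct (gprop p0) as [HD [Hm [H0 [Hc Hc']]]].
  split; [|split; [|split; [|split]]]; simpl.
  - split; [|split].
    + exists p0. split; auto. apply (alg_full _ _ HD).
    + intros S [p [Ap HS]]. exists p. split; auto. apply (alg_compl _ _ (proj1 (gprop p))). auto.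
    + intros S T [p [Ap HS]] [q [Aq HT]]. destruct (common p q Ap Aq) as [r [Ar [Pr Qr]]].
      exists r. split; auto. apply (alg_and _ _ (proj1 (gprop r))).
      apply (Pr S HS). apply (Qr T HT).
  - split; [|split].
    + intros S [p [Ap HS]]. rewrite (mU_val p S Ap HS). apply (m_nonneg _ _ _ (proj1 (proj2 (gprop p)))). auto.
    + rewrite (mU_val p0 _ Ap0 (alg_full _ _ HD)). apply (m_full _ _ _ Hm).
    + intros S T [p [Ap HS]] [q [Aq HT]] Dis. destruct (common p q Ap Aq) as [r [Ar [Pr Qr]]].
      destruct (Pr S HS) as [S1 _]. destruct (Qr T HT) as [T1 _].
      destruct (gprop r) as [HDr [Hmr _]].
      rewrite (mU_val r S Ar S1), (mU_val r T Ar T1), (mU_val r _ Ar (alg_or _ _ HDr S T S1 T1)).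
      apply (m_add _ _ _ Hmr); auto.
  - intros S HS. destruct (H0 S HS) as [A1 A2]. split.
    + exists p0. auto.
    + rewrite (mU_val p0 S Ap0 A1). auto.
  - exists p0. auto.
  - rewrite (mU_val p0 c Ap0 Hc). auto.
Qed.

Lemma U_ub p : A p -> Rl p (exist _ (DU, mU) U_good).
Proof.
  intros Ap S HS. simpl. split.
  - exists p. auto.
  - apply (mU_val p S Ap HS).
Qed.
End Chain.

Theorem extension : exists m, meas X (fun _ => True) m /\
  (forall S, D0 S -> m S = m0 S) /\ m c = outer X D0 m0 c.
Proof.
  set (b := exist good _ base_good).
  destruct (zorn_prop GP b Rl Rl_refl Rl_trans) as [t Ht].
  - intros A Atot. destruct (classic (exists p, A p)) as [[p0 Ap0]|N].
    + exists (exist _ (DU A, mU A) (U_good A Atot p0 Ap0)). intros s As. apply U_ub; auto.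
    + exists b. intros s As. exfalso. apply N. eauto.
  - assert (All : forall S, fst (proj1_sig t) S).
    { intro S. set (q := exist good _ (step_good t S)).
      assert (Rtq : Rl t q).
      { intros S0 HS0. destruct (gprop t) as [HD [Hm _]].
        unfold q; simpl. apply (m'_extends X _ HD _ Hm S S0 HS0). }
      specialize (Ht q Rtq).
      destruct (gprop t) as [HD [Hm _]].
      apply (Ht S). unfold q; simpl. apply (m'_c X _ HD _ Hm S). }
    destruct (gprop t) as [HD [Hm [H0 [Hc Hc']]]].
    exists (snd (proj1_sig t)). split; [|split].
    + destruct Hm as [M1 [M2 M3]]. split; [|split]; auto.
    + intros S HS. apply (H0 S HS).
    + auto.
Qed.
End Ext.
Lemma alg_all (X : Type) : alg X (fun _ => True).
Proof. split; [|split]; auto. Qed.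

Lemma meas_weaken (X : Type) (D D' : st X -> Prop) m :
  meas X D m -> (forall S, D' S -> D S) -> meas X D' m.
Proof. intros [A [B C]] I. split; [|split]; auto. Qed.

Lemma core (X : Type) (D2 D : st X -> Prop) (HD2 : alg X D2) (lam : st X -> R)
  (Hlam : meas X D2 lam) (w : st X -> R)
  (uniq : forall w1, meas X (fun _ => True) w1 -> (forall a, D2 a -> w1 a = lam a) ->
          forall c, D c -> w1 c = w c) :
  forall c, D c -> forall r,
    (forall a, D2 a -> (forall x, c x -> a x) -> r <= lam a) ->
    (forall a, D2 a -> (forall x, a x -> c x) -> lam a <= r) -> r = w c.
Proof.
  intros c Dc r H1 H2.
  destruct (extension X D2 HD2 lam Hlam c) as [m1 [Hm1 [E1 C1]]].
  destruct (extension X D2 HD2 lam Hlam (fun x => ~ c x)) as [m2 [Hm2 [E2 C2]]].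
  assert (L1 : r <= outer X D2 lam c) by (apply (o_ge X D2 HD2 lam Hlam); auto).
  assert (L2 : 1 - r <= outer X D2 lam (fun x => ~ c x)).
  { apply (o_ge X D2 HD2 lam Hlam). intros d Dd I.
    assert (lam (fun x => ~ d x) <= r).
    { apply H2. apply (alg_compl X D2 HD2); auto.
      intros x nd. apply NNPP. intro nc. apply nd. apply I. exact nc. }
    rewrite (m_compl X D2 HD2 lam Hlam d Dd) in H. lra. }
  assert (M2 : m2 c = 1 - m2 (fun x => ~ c x)).
  { rewrite (m_compl X _ (alg_all X) m2 Hm2 c I). lra. }
  assert (U1 := uniq m1 Hm1 E1 c Dc).
  assert (U2 := uniq m2 Hm2 E2 c Dc).
  lra.
Qed.

From Stdlib Require Import List Lia.
Local Open Scope list_scope.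
Section MT.
Context {L : Language} (U : Structure L).

Lemma term_vars_mono V V' (t : term L U) : (forall i, V i -> V' i) -> term_vars V t -> term_vars V' t.
Proof. induction t; simpl; auto. Qed.

Lemma form_vars_mono (phi : formula L U) : forall V V', (forall i, V i -> V' i) ->
  form_vars V phi -> form_vars V' phi.
Proof.
  induction phi; intros V V' I H; simpl in *.
  - destruct H; split; eapply term_vars_mono; eauto.
  - intro k. eapply term_vars_mono; eauto.
  - eapply IHphi; eauto.
  - destruct H; split; [eapply IHphi1|eapply IHphi2]; eauto.
  - eapply IHphi; [|exact H]. intros i [E|E]; auto.
Qed.

Lemma term_params_mono C C' (t : term L U) : (forall i, C i -> C' i) -> term_params C t -> term_params C' t.
Proof. induction t; simpl; auto. Qed.

Lemma form_params_mono C C' (phi : formula L U) : (forall i, C i -> C' i) ->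
  form_params C phi -> form_params C' phi.
Proof.
  intro I. induction phi; intros H; simpl in *.
  - destruct H; split; eapply term_params_mono; eauto.
  - intro k. eapply term_params_mono; eauto.
  - auto.
  - destruct H; split; auto.
  - auto.
Qed.

Lemma definable_mono V V' C C' S : (forall i, V i -> V' i) -> (forall b, C b -> C' b) ->
  definable U V C S -> definable U V' C' S.
Proof.
  intros I J [phi [P [Vv E]]]. exists phi. split; [|split]; auto.
  - eapply form_params_mono; eauto.
  - eapply form_vars_mono; eauto.
Qed.

Lemma eval_coinc V (t : term L U) e1 e2 : term_vars V t -> (forall i, V i -> e1 i = e2 i) ->
  eval U e1 t = eval U e2 t.
Proof.
  induction t; simpl; intros Hv Ag; auto.
  f_equal. extensionality k. auto.
Qed.

Lemma sat_coinc (phi : formula L U) : forall V e1 e2, form_vars V phi ->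
  (forall i, V i -> e1 i = e2 i) -> (sat U e1 phi <-> sat U e2 phi).
Proof.
  induction phi; intros V e1 e2 Hv Ag; simpl in *.
  - destruct Hv. rewrite (eval_coinc V t e1 e2), (eval_coinc V t0 e1 e2); auto. reflexivity.
  - replace (fun k => eval U e1 (t k)) with (fun k => eval U e2 (t k)). reflexivity.
    extensionality k. symmetry. apply (eval_coinc V); auto.
  - rewrite (IHphi V e1 e2); auto. reflexivity.
  - destruct Hv. rewrite (IHphi1 V e1 e2), (IHphi2 V e1 e2); auto. reflexivity.
  - split; intros [a H]; exists a.
    + rewrite <- (IHphi _ (upd e1 n a) (upd e2 n a) Hv); auto.
      intros i Hi. unfold upd. destruct (Nat.eqb_spec i n); auto.
      destruct Hi; [contradiction|auto].
    + rewrite (IHphi _ (upd e1 n a) (upd e2 n a) Hv); auto.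
      intros i Hi. unfold upd. destruct (Nat.eqb_spec i n); auto.
      destruct Hi; [contradiction|auto].
Qed.

Lemma def_alg V C : alg (env U) (definable U V C).
Proof.
  split; [|split].
  - exists (fEx 0 (fEq (tvar 0) (tvar 0))). simpl. split; [tauto|split; [tauto|]].
    apply sext. intro e. unfold sat_set. simpl. split; auto. intros _. exists (e 0%nat). reflexivity.
  - intros S [phi [P [Vv E]]]. exists (fNeg phi). subst S. split; [|split]; auto.
  - intros S T [phi [P [Vv E]]] [psi [P' [Vv' E']]]. exists (fAnd phi psi). subst S T.
    split; [|split]; simpl; auto.
Qed.

Fixpoint exs (zs : list nat) (phi : formula L U) : formula L U :=
  match zs with nil => phi | z :: zs' => fEx z (exs zs' phi) end.

Lemma exs_params C zs phi : form_params C phi -> form_params C (exs zs phi).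
Proof. induction zs; simpl; auto. Qed.

Lemma exs_vars zs : forall V W phi, form_vars V phi -> (forall i, V i -> W i \/ In i zs) ->
  form_vars W (exs zs phi).
Proof.
  induction zs as [|a zs IH]; simpl; intros V W phi H I.
  - eapply form_vars_mono; [|exact H]. intros i Vi. destruct (I i Vi); tauto.
  - apply (IH V). auto. intros i Vi. destruct (I i Vi) as [J|[J|J]]; auto.
Qed.

Lemma exs_intro zs phi e : sat U e phi -> sat U e (exs zs phi).
Proof.
  induction zs as [|a zs IH]; simpl; auto. intro H. exists (e a).
  replace (upd e a (e a)) with e. auto.
  extensionality j. unfold upd. destruct (Nat.eqb_spec j a); subst; auto.
Qed.

Lemma exs_elim zs phi : forall e, sat U e (exs zs phi) ->
  exists e', sat U e' phi /\ (forall i, ~ In i zs -> e' i = e i).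
Proof.
  induction zs as [|a zs IH]; simpl; intros e H.
  - exists e. auto.
  - destruct H as [a0 H]. destruct (IH _ H) as [e' [S E]]. exists e'. split; auto.
    intros i Ni. rewrite E by tauto. unfold upd. destruct (Nat.eqb_spec i a); auto.
    exfalso; apply Ni; auto.
Qed.

Lemma proj_lemma (V W : nat -> Prop) (zs : list nat) (A : U -> Prop) :
  (forall i, V i -> W i \/ In i zs) -> (forall i, W i -> ~ In i zs) ->
  forall a, definable U V A a -> exists p, definable U W A p /\ (forall x, a x -> p x) /\
    (forall S, definable U W (everything U) S -> (forall x, a x -> S x) -> forall x, p x -> S x).
Proof.
  intros I1 I2 a [phi [P [Vv E]]]. subst a.
  exists (sat_set U (exs zs phi)). split; [|split].
  - exists (exs zs phi). split; [apply exs_params; auto|split; auto].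
    apply (exs_vars zs V); auto.
  - intros x H. apply exs_intro. exact H.
  - intros S [chi [P' [Vc E']]] Sub x Hx. subst S.
    destruct (exs_elim zs phi x Hx) as [e' [He' Ee']].
    specialize (Sub e' He'). unfold sat_set in *.
    rewrite <- (sat_coinc chi W e' x Vc); auto.
Qed.
End MT.

Lemma rho_lemma {L : Language} (U : Structure L) (n m : nat) (A : U -> Prop)
  (lam w rho : vset U -> R) (W : nat -> Prop) (zs : list nat)
  (Z1 : forall i, Vxy n m i -> W i \/ In i zs) (Z2 : forall i, W i -> ~ In i zs)
  (Z3 : forall i, W i -> Vxy n m i)
  (Hlam : meas (env U) (definable U (Vxy n m) A) lam)
  (Hcore : forall c, definable U (Vxy n m) (everything U) c -> forall r,
    (forall a, definable U (Vxy n m) A a -> (forall x, c x -> a x) -> r <= lam a) ->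
    (forall a, definable U (Vxy n m) A a -> (forall x, a x -> c x) -> lam a <= r) -> r = w c)
  (Hrho : meas (env U) (definable U W (everything U)) rho)
  (HrA : forall a, definable U W A a -> rho a = lam a) :
  forall S, definable U W (everything U) S -> rho S = w S.
Proof.
  assert (HD2 := def_alg U (Vxy n m) A).
  assert (HDW := def_alg U W (everything U)).
  assert (Step : forall S, definable U W (everything U) S -> forall a,
     definable U (Vxy n m) A a -> (forall x, a x -> S x) -> lam a <= rho S).
  { intros S HS a Ha Sub.
    destruct (proj_lemma U (Vxy n m) W zs A Z1 Z2 a Ha) as [p [Hp [I1 I2]]].
    assert (Hp2 : definable U (Vxy n m) A p) by (eapply definable_mono; [exact Z3| |exact Hp]; auto).
    assert (Hp3 : definable U W (everything U) p) by (eapply definable_mono; [| |exact Hp]; unfold everything; auto).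
    assert (lam a <= lam p) by (apply (m_mono _ _ HD2 lam Hlam); auto).
    assert (rho p <= rho S) by (apply (m_mono _ _ HDW rho Hrho); auto; apply I2; auto).
    rewrite <- (HrA p Hp) in H. lra. }
  intros S HS. apply Hcore.
  - eapply definable_mono; [exact Z3| |exact HS]; auto.
  - intros a Ha Sub.
    assert (N := Step (fun x => ~ S x) (alg_compl _ _ HDW S HS) (fun x => ~ a x)
                 (alg_compl _ _ HD2 a Ha) ltac:(intros x H1 H2; apply H1; apply Sub; exact H2)).
    rewrite (m_compl _ _ HD2 lam Hlam a Ha), (m_compl _ _ HDW rho Hrho S HS) in N. lra.
  - intros a Ha Sub. apply Step; auto.
Qed.

Theorem proposition4p9 (L : Language) (U : Structure L) (K : Type)
  (HU : monster U K) (A : U -> Prop) (HA : small U K A) (n m : nat)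
  (mu nu lam : vset U -> R)
  (Hmu : keisler_measure U (Vx n) (everything U) mu)
  (Hnu : keisler_measure U (Vy n m) (everything U) nu)
  (Hlam : keisler_measure U (Vxy n m) A lam)
  (Hwit : witnesses_E U n m A lam mu nu)
  (Hsmooth : smooth_over U (Vxy n m) A lam) :
  smooth_global U (Vx n) A mu /\ smooth_global U (Vy n m) A nu.
Proof.
  destruct Hsmooth as [[w [Hw Hwl]] Huniq].
  assert (HD2 := def_alg U (Vxy n m) A).
  assert (Hlam' : meas (env U) (definable U (Vxy n m) A) lam) by exact Hlam.
  assert (Hcore : forall c, definable U (Vxy n m) (everything U) c -> forall r,
    (forall a, definable U (Vxy n m) A a -> (forall x, c x -> a x) -> r <= lam a) ->
    (forall a, definable U (Vxy n m) A a -> (forall x, a x -> c x) -> lam a <= r) -> r = w c).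
  { apply (core (env U) _ _ HD2 lam Hlam' w).
    intros w1 Hw1 E1 c Dc. apply (Huniq w1 w); auto.
    apply (meas_weaken _ _ _ w1 Hw1). auto. }
  destruct Hwit as [Hw1 Hw2].
  assert (ZX1 : forall i, Vxy n m i -> Vx n i \/ In i (seq n m)).
  { intros i Hi. unfold Vxy, Vx in *. rewrite in_seq. lia. }
  assert (ZX2 : forall i, Vx n i -> ~ In i (seq n m)).
  { intros i Hi. unfold Vx in *. rewrite in_seq. lia. }
  assert (ZX3 : forall i, Vx n i -> Vxy n m i). { unfold Vx, Vxy. intros; lia. }
  assert (ZY1 : forall i, Vxy n m i -> Vy n m i \/ In i (seq 0 n)).
  { intros i Hi. unfold Vxy, Vy in *. rewrite in_seq. lia. }
  assert (ZY2 : forall i, Vy n m i -> ~ In i (seq 0 n)).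
  { intros i Hi. unfold Vy in *. rewrite in_seq. lia. }
  assert (ZY3 : forall i, Vy n m i -> Vxy n m i). { unfold Vy, Vxy. intros; lia. }
  assert (Hmuw : forall S, definable U (Vx n) (everything U) S -> mu S = w S).
  { apply (rho_lemma U n m A lam w mu (Vx n) (seq n m)); auto.
    intros a Ha. symmetry. apply Hw1. auto. }
  split.
  - intros mu' Hmu' Hag S HS.
    rewrite (Hmuw S HS).
    apply (rho_lemma U n m A lam w mu' (Vx n) (seq n m)); auto.
    intros a Ha. rewrite (Hag a Ha). symmetry. apply Hw1. auto.
  - assert (Hwnu : agree U (Vy n m) (everything U) w nu).
    { apply Hw2; auto. intros S HS. symmetry. auto. }
    intros nu' Hnu' Hag S HS.
    rewrite <- (Hwnu S HS).
    apply (rho_lemma U n m A lam w nu' (Vy n m) (seq 0 n)); auto.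
    intros a Ha. rewrite (Hag a Ha). rewrite <- (Hwnu a).
    + apply Hwl. eapply definable_mono; [exact ZY3| |exact Ha]; auto.
    + eapply definable_mono; [| |exact Ha]; unfold everything; auto.
Qed.
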